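(* Let $k\ge2$ and $\beta\in\mathbb R$, and let $P(z_1,\dots,z_k)=\beta\prod_{i=1}^k(1+z_i)+(1-\beta)\big(1+\prod_{i=1}^kz_i\big)$ be the multivariate Ising partition function of the hypergraph consisting of a single hyperedge $\{1,\dots,k\}$ with activity $\beta$. If either $k=2$ and $-1<\beta<1$, or $k\ge3$ and $-\frac{1}{2^{k-1}-1}<\beta<\frac{1}{2^{k-1}\cos^{k-1}(\frac{\pi}{k-1})+1}$, then $P$ has the Lee-Yang property.
   Context: A multilinear polynomial $P(z_1,\dots,z_n)$ has the Lee-Yang property if $P(\lambda_1,\dots,\lambda_n)\neq0$ whenever $|\lambda_i|\ge1$ for all $i$ and $|\lambda_i|>1$ for at least one $i$. *)

(* Defs.v *)
From Stdlib Require Import Reals.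
Open Scope R_scope.

Record Cx := mkCx { re : R; im : R }.

Definition Cx0 : Cx := mkCx 0 0.
Definition Cx1 : Cx := mkCx 1 0.
Definition Cx_of_R (a : R) : Cx := mkCx a 0.
Definition Cxadd (z w : Cx) : Cx := mkCx (re z + re w) (im z + im w).
Definition Cxmul (z w : Cx) : Cx :=
  mkCx (re z * re w - im z * im w) (re z * im w + im z * re w).
Definition Cxmod (z : Cx) : R := sqrt (re z * re z + im z * im z).

Fixpoint Cxprod (n : nat) (f : nat -> Cx) : Cx :=
  match n with
  | O => Cx1
  | S m => Cxmul (Cxprod m f) (f m)
  end.

Definition ising_edge (k : nat) (beta : R) (z : nat -> Cx) : Cx :=
  Cxadd (Cxmul (Cx_of_R beta) (Cxprod k (fun i => Cxadd Cx1 (z i))))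
        (Cxmul (Cx_of_R (1 - beta)) (Cxadd Cx1 (Cxprod k z))).

Definition LeeYang (n : nat) (P : (nat -> Cx) -> Cx) : Prop :=
  forall z : nat -> Cx,
    (forall i, (i < n)%nat -> 1 <= Cxmod (z i)) ->
    (exists i, (i < n)%nat /\ 1 < Cxmod (z i)) ->
    P z <> Cx0.

(* Main.v *)
Require Import Defs.
From Stdlib Require Import Reals Lra Lia Psatz Arith ZArith Classical FunctionalExtensionality.
Open Scope R_scope.

Definition Nm (z : Cx) : R := re z * re z + im z * im z.

Lemma Cx_eq (z w : Cx) : re z = re w -> im z = im w -> z = w.
Proof. destruct z, w; simpl; intros; subst; reflexivity. Qed.

Lemma Nm_ge0 z : 0 <= Nm z.
Proof. unfold Nm; nra. Qed.

Lemma Nm_mul z w : Nm (Cxmul z w) = Nm z * Nm w.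
Proof. destruct z, w; unfold Nm; simpl; ring. Qed.

Lemma N0_eq z : Nm z = 0 -> z = Cx0.
Proof. destruct z as [a b]; unfold Nm; simpl; intros H. apply Cx_eq; simpl; nra. Qed.

Lemma mul_assoc_comm a b c : Cxmul (Cxmul a b) c = Cxmul (Cxmul a c) b.
Proof. destruct a, b, c; apply Cx_eq; simpl; ring. Qed.

Fixpoint Rprod (n : nat) (f : nat -> R) : R :=
  match n with O => 1 | S m => Rprod m f * f m end.
Fixpoint Rsum (n : nat) (f : nat -> R) : R :=
  match n with O => 0 | S m => Rsum m f + f m end.

Lemma prod_ext n f g : (forall i, (i < n)%nat -> f i = g i) -> Cxprod n f = Cxprod n g.
Proof.
  induction n; simpl; intros H; auto.
  rewrite IHn by (intros; apply H; lia). rewrite H by lia. auto.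
Qed.

Lemma Rprod_ext n f g : (forall i, (i < n)%nat -> f i = g i) -> Rprod n f = Rprod n g.
Proof.
  induction n; simpl; intros H; auto.
  rewrite IHn by (intros; apply H; lia). rewrite H by lia. auto.
Qed.

Lemma Rsum_ext n f g : (forall i, (i < n)%nat -> f i = g i) -> Rsum n f = Rsum n g.
Proof.
  induction n; simpl; intros H; auto.
  rewrite IHn by (intros; apply H; lia). rewrite H by lia. auto.
Qed.

Definition skip (j i : nat) : nat := if (i <? j)%nat then i else S i.

Lemma skip_neq j i : skip j i <> j.
Proof. unfold skip; destruct (Nat.ltb_spec i j); lia. Qed.

Lemma skip_lt j i n : (j < S n)%nat -> (i < n)%nat -> (skip j i < S n)%nat.
Proof. unfold skip; destruct (Nat.ltb_spec i j); lia. Qed.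

Lemma prod_skip n j f : (j < S n)%nat ->
  Cxprod (S n) f = Cxmul (Cxprod n (fun i => f (skip j i))) (f j).
Proof.
  revert j. induction n; intros j Hj.
  - assert (j = 0%nat) by lia; subst. reflexivity.
  - destruct (Nat.eq_dec j (S n)) as [->|Hne].
    + change (Cxprod (S (S n)) f) with (Cxmul (Cxprod (S n) f) (f (S n))).
      f_equal. apply prod_ext. intros i Hi. unfold skip.
      destruct (Nat.ltb_spec i (S n)); [reflexivity|lia].
    + change (Cxprod (S (S n)) f) with (Cxmul (Cxprod (S n) f) (f (S n))).
      rewrite (IHn j) by lia. simpl Cxprod at 2.
      replace (skip j n) with (S n).
      * apply mul_assoc_comm.
      * unfold skip; destruct (Nat.ltb_spec n j); lia.
Qed.

Definition upd (w : nat -> Cx) (j : nat) (z : Cx) : nat -> Cx :=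
  fun i => if (i =? j)%nat then z else w i.

Lemma upd_skip w j z i : upd w j z (skip j i) = w (skip j i).
Proof. unfold upd. destruct (Nat.eqb_spec (skip j i) j); [exfalso; apply (skip_neq j i); auto|auto]. Qed.

Lemma upd_eq w j z : upd w j z j = z.
Proof. unfold upd. rewrite Nat.eqb_refl. auto. Qed.

Lemma upd_neq w j z i : i <> j -> upd w j z i = w i.
Proof. unfold upd. intros. destruct (Nat.eqb_spec i j); [lia|auto]. Qed.

Lemma Nm_prod n f : Nm (Cxprod n f) = Rprod n (fun i => Nm (f i)).
Proof. induction n; simpl. unfold Nm; simpl; ring. rewrite Nm_mul, IHn; auto. Qed.

Definition phi a b c d z := Nm (Cxadd c (Cxmul d z)) - Nm (Cxadd a (Cxmul b z)).
Definition lin (p q : Cx) (s : R) := mkCx ((1-s)*re p + s*re q) ((1-s)*im p + s*im q).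

Lemma phi_lin a b c d p q s :
  phi a b c d (lin p q s) = (1-s)*phi a b c d p + s*phi a b c d q
     - (Nm d - Nm b) * s * (1-s) * ((re p - re q)^2 + (im p - im q)^2).
Proof. destruct a, b, c, d, p, q; unfold phi, lin, Nm; simpl; ring. Qed.

Lemma mobius a b c d :
  (forall z, Nm z <= 1 -> Cxadd c (Cxmul d z) <> Cx0) ->
  (forall z, Nm z = 1 -> Nm (Cxadd a (Cxmul b z)) <= Nm (Cxadd c (Cxmul d z))) ->
  forall z, Nm z <= 1 -> Nm (Cxadd a (Cxmul b z)) <= Nm (Cxadd c (Cxmul d z)).
Proof.
  intros HNV Hc z0 Hz0.
  destruct (Rle_or_lt (Nm (Cxadd a (Cxmul b z0))) (Nm (Cxadd c (Cxmul d z0)))) as [H|Hneg]; auto.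
  exfalso.
  assert (Hph : phi a b c d z0 < 0) by (unfold phi; lra).
  destruct (Req_dec (Nm z0) 1) as [E|E].
  { specialize (Hc z0 E). lra. }
  assert (Hlt : Nm z0 < 1) by lra. clear E.
  assert (Hphc : forall q, Nm q = 1 -> 0 <= phi a b c d q) by (intros q Hq; unfold phi; specialize (Hc q Hq); lra).
  destruct z0 as [x0 y0]. unfold Nm in Hlt; simpl in Hlt.
  destruct (Rle_or_lt (Nm d - Nm b) 0) as [HC|HC].
  -
    set (D := x0*x0 + 1 - (x0*x0+y0*y0)).
    assert (HD : 0 < D) by (unfold D; nra).
    set (r := sqrt D).
    assert (Hr : r*r = D) by (apply sqrt_sqrt; lra).
    assert (Hr0 : 0 <= r) by apply sqrt_pos.
    assert (Hrx : x0 < r /\ - x0 < r) by (unfold D in Hr; split; nra).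
    set (p := mkCx (-r) y0). set (q := mkCx r y0).
    set (s := (x0 + r) / (2*r)).
    assert (Hs : 0 < s < 1).
    { unfold s; split; [apply Rdiv_lt_0_compat; lra|]. apply Rmult_lt_reg_r with (2*r); [lra|].
      unfold Rdiv; rewrite Rmult_assoc, Rinv_l by lra; lra. }
    assert (Heq : lin p q s = mkCx x0 y0).
    { apply Cx_eq; simpl; [|ring]. unfold s. field_simplify; [|lra]. field. lra. }
    assert (Hp : Nm p = 1) by (unfold Nm, p; simpl; unfold D in Hr; nra).
    assert (Hq : Nm q = 1) by (unfold Nm, q; simpl; unfold D in Hr; nra).
    pose proof (phi_lin a b c d p q s) as L. rewrite Heq in L.
    pose proof (Hphc p Hp). pose proof (Hphc q Hq).
    assert (0 <= - (Nm d - Nm b) * s * (1-s) * ((re p - re q)^2 + (im p - im q)^2)).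
    { apply Rmult_le_pos; [|apply Rplus_le_le_0_compat; apply pow2_ge_0]. apply Rmult_le_pos; [|lra]. apply Rmult_le_pos; lra. }
    assert (0 <= (1-s) * phi a b c d p) by (apply Rmult_le_pos; lra).
    assert (0 <= s * phi a b c d q) by (apply Rmult_le_pos; lra).
    lra.
  -
    assert (Hd : Nm d <> 0) by (pose proof (Nm_ge0 b); lra).
    set (p0 := mkCx (- (re c * re d + im c * im d) / Nm d) (- (im c * re d - re c * im d) / Nm d)).
    assert (Hpole : Cxadd c (Cxmul d p0) = Cx0).
    { unfold p0; destruct c as [c1 c2], d as [d1 d2]; unfold Nm in *; simpl in *.
      apply Cx_eq; simpl; field; auto. }
    assert (Hphp : phi a b c d p0 <= 0).
    { unfold phi. rewrite Hpole. pose proof (Nm_ge0 (Cxadd a (Cxmul b p0))). unfold Nm at 1; simpl. lra. }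
    assert (Hp0 : 1 < Nm p0).
    { destruct (Rle_or_lt (Nm p0) 1) as [h|h]; auto. exfalso; exact (HNV p0 h Hpole). }
    destruct p0 as [p1 p2] eqn:Ep0. unfold Nm in Hp0; simpl in Hp0.
    set (e1 := p1 - x0). set (e2 := p2 - y0).
    set (E := e1*e1 + e2*e2). set (L := x0*e1 + y0*e2).
    assert (HE : 0 < E).
    { unfold E, e1, e2. destruct (Rle_or_lt ((p1-x0)*(p1-x0) + (p2-y0)*(p2-y0)) 0); [|lra].
      exfalso. assert (Z : Rsqr (p1 - x0) + Rsqr (p2 - y0) = 0) by (pose proof (Rle_0_sqr (p1-x0)); pose proof (Rle_0_sqr (p2-y0)); unfold Rsqr in *; lra).
      pose proof (Rplus_sqr_eq_0_l _ _ Z). rewrite Rplus_comm in Z. pose proof (Rplus_sqr_eq_0_l _ _ Z).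
      assert (p1 = x0) by lra. assert (p2 = y0) by lra. subst. lra. }
    assert (Hg1 : x0*x0+y0*y0 + 2*L + E = p1*p1+p2*p2) by (unfold L, E, e1, e2; ring).
    set (D := L*L + E*(1 - (x0*x0+y0*y0))).
    assert (HD : 0 < D) by (unfold D; nra).
    set (r := sqrt D).
    assert (Hr : r*r = D) by (apply sqrt_sqrt; lra).
    assert (Hr0 : 0 <= r) by apply sqrt_pos.
    assert (HrL : L < r) by (unfold D in Hr; nra).
    assert (HrL2 : r < E + L).
    { assert (0 < E + L) by lra.
      assert (r*r < (E+L)*(E+L)) by (unfold D in Hr; nra). nra. }
    set (s := (r - L) / E).
    assert (Hs : 0 < s < 1).
    { unfold s; split; [apply Rdiv_lt_0_compat; lra|]. apply Rmult_lt_reg_r with E; [lra|].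
      unfold Rdiv; rewrite Rmult_assoc, Rinv_l by lra; lra. }
    assert (HsE : s * E = r - L) by (unfold s; field; lra).
    set (q := lin (mkCx x0 y0) (mkCx p1 p2) s).
    assert (Hq : Nm q = 1).
    { unfold q, lin, Nm; simpl.
      replace (((1 - s) * x0 + s * p1) * ((1 - s) * x0 + s * p1) + ((1 - s) * y0 + s * p2) * ((1 - s) * y0 + s * p2))
        with (x0*x0+y0*y0 + 2*s*L + s*(s*E)) by (unfold L, E, e1, e2; ring).
      rewrite HsE. unfold D in Hr. nra. }
    pose proof (Hphc q Hq) as Hqq. unfold q in Hqq. rewrite phi_lin in Hqq.
    assert (0 <= (Nm d - Nm b) * s * (1-s) * ((re (mkCx x0 y0) - re (mkCx p1 p2))^2 + (im (mkCx x0 y0) - im (mkCx p1 p2))^2)).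
    { apply Rmult_le_pos; [|apply Rplus_le_le_0_compat; apply pow2_ge_0]. apply Rmult_le_pos; [|lra]. apply Rmult_le_pos; lra. }
    nra.
Qed.

Definition U m (w : nat -> Cx) := Cxprod m (fun i => Cxadd Cx1 (w i)).
Definition W m (w : nat -> Cx) := Cxprod m w.
Definition Af al ga m w := Cxadd (Cxmul (Cx_of_R al) (U m w)) (Cxmul (Cx_of_R ga) (W m w)).
Definition Bf al ga m w := Cxadd (Cxmul (Cx_of_R al) (U m w)) (Cx_of_R ga).
Definition conj (z : Cx) := mkCx (re z) (- im z).

Lemma conj_prod m w : (forall i, (i < m)%nat -> Nm (w i) = 1) ->
  Cxmul (U m w) (conj (W m w)) = conj (U m w).
Proof.
  unfold U, W. induction m; intros H.
  - apply Cx_eq; simpl; ring.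
  - simpl. pose proof (IHm (fun i Hi => H i (Nat.lt_lt_succ_r _ _ Hi))) as IH.
    assert (Hm := H m (Nat.lt_succ_diag_r m)). unfold Nm in Hm.
    destruct (Cxprod m (fun i => Cxadd Cx1 (w i))) as [u1 u2], (Cxprod m w) as [v1 v2], (w m) as [x y].
    unfold conj in *; simpl in *. injection IH as I1 I2.
    apply Cx_eq; simpl.
    + replace ((u1 * (1 + x) - u2 * (0 + y)) * (v1 * x - v2 * y) -
               (u1 * (0 + y) + u2 * (1 + x)) * - (v1 * y + v2 * x))
       with ((u1 * v1 - u2 * - v2) * (1 + x) - (u1 * - v2 + u2 * v1) * - y + (u1*v1 + u2*v2)*(x*x+y*y-1)) by ring.
      rewrite Hm, I1, I2. ring.
    + replace ((u1 * (1 + x) - u2 * (0 + y)) * - (v1 * y + v2 * x) +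
               (u1 * (0 + y) + u2 * (1 + x)) * (v1 * x - v2 * y))
       with ((u1 * v1 - u2 * - v2) * - y + (u1 * - v2 + u2 * v1) * (1 + x) + (u2*v1 - u1*v2)*(x*x+y*y-1)) by ring.
      rewrite Hm, I1, I2. ring.
Qed.

Lemma Rprod_one m f : (forall i, (i < m)%nat -> f i = 1) -> Rprod m f = 1.
Proof. induction m; simpl; intros H; auto. rewrite IHm, H by (auto; intros; apply H; lia). ring. Qed.

Lemma torus al ga m w : (forall i, (i < m)%nat -> Nm (w i) = 1) ->
  Nm (Af al ga m w) = Nm (Bf al ga m w).
Proof.
  intros H. pose proof (conj_prod m w H) as C.
  assert (NW : Nm (W m w) = 1) by (unfold W; rewrite Nm_prod; apply Rprod_one; auto).
  unfold Af, Bf. destruct (U m w) as [u1 u2], (W m w) as [v1 v2].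
  unfold Nm, conj in *; simpl in *.
  injection C as C1 C2.
  replace ((al * u1 - 0 * u2 + (ga * v1 - 0 * v2)) * (al * u1 - 0 * u2 + (ga * v1 - 0 * v2)) +
   (al * u2 + 0 * u1 + (ga * v2 + 0 * v1)) * (al * u2 + 0 * u1 + (ga * v2 + 0 * v1)))
   with ((al * u1 - 0 * u2 + ga) * (al * u1 - 0 * u2 + ga) + (al * u2 + 0 * u1 + 0) * (al * u2 + 0 * u1 + 0)
     + 2*al*ga*((u1 * v1 - u2 * - v2) - u1) + ga*ga*(v1*v1+v2*v2-1)) by ring.
  rewrite C1, NW. ring.
Qed.

Definition disk m (w : nat -> Cx) := forall i, (i < m)%nat -> Nm (w i) <= 1.

Lemma prod_upd n j (w : nat -> Cx) (z : Cx) (f : Cx -> Cx) : (j < S n)%nat ->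
  Cxprod (S n) (fun i => f (upd w j z i)) =
  Cxmul (Cxprod n (fun i => f (w (skip j i)))) (f z).
Proof.
  intros Hj. rewrite (prod_skip n j) by auto. rewrite upd_eq. f_equal.
  apply prod_ext. intros i _. rewrite upd_skip. auto.
Qed.

Lemma prod_upd_id n j (w : nat -> Cx) (z : Cx) : (j < S n)%nat ->
  Cxprod (S n) (upd w j z) = Cxmul (Cxprod n (fun i => w (skip j i))) z.
Proof. intros Hj. exact (prod_upd n j w z (fun x => x) Hj). Qed.

Lemma prod_at n j (w : nat -> Cx) (f : Cx -> Cx) : (j < S n)%nat ->
  Cxprod (S n) (fun i => f (w i)) =
  Cxmul (Cxprod n (fun i => f (w (skip j i)))) (f (w j)).
Proof. intros Hj. rewrite (prod_skip n j (fun i => f (w i))) by auto. reflexivity. Qed.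

Lemma Q_lemma al ga m :
  (forall w, disk m w -> Bf al ga m w <> Cx0) ->
  forall j, (j <= m)%nat -> forall w, disk m w ->
    (forall i, (j <= i)%nat -> (i < m)%nat -> Nm (w i) = 1) ->
    Nm (Af al ga m w) <= Nm (Bf al ga m w).
Proof.
  intros NV j. induction j; intros Hj w Hw Hc.
  - right. apply torus. intros i Hi. apply Hc; lia.
  - destruct m as [|n]; [lia|].
    set (Uj := Cxprod n (fun i => Cxadd Cx1 (w (skip j i)))).
    set (Wj := Cxprod n (fun i => w (skip j i))).
    set (a := Cxmul (Cx_of_R al) Uj).
    set (b := Cxadd (Cxmul (Cx_of_R al) Uj) (Cxmul (Cx_of_R ga) Wj)).
    set (c := Cxadd (Cxmul (Cx_of_R al) Uj) (Cx_of_R ga)).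
    set (d := Cxmul (Cx_of_R al) Uj).
    assert (EA : forall z, Af al ga (S n) (upd w j z) = Cxadd a (Cxmul b z)).
    { intros z. unfold Af, U, W.
      rewrite (prod_upd n j w z (fun x => Cxadd Cx1 x)) by lia.
      rewrite (prod_upd_id n j w z) by lia.
      fold Uj Wj. unfold a, b. destruct Uj, Wj, z. apply Cx_eq; simpl; ring. }
    assert (EB : forall z, Bf al ga (S n) (upd w j z) = Cxadd c (Cxmul d z)).
    { intros z. unfold Bf, U.
      rewrite (prod_upd n j w z (fun x => Cxadd Cx1 x)) by lia.
      fold Uj. unfold c, d. destruct Uj, z. apply Cx_eq; simpl; ring. }
    assert (Ew : forall z, z = w j -> upd w j z = w).
    { intros z ->. apply functional_extensionality. intros i. unfold upd.
      destruct (Nat.eqb_spec i j); subst; auto. }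
    assert (Hupd : forall z, Nm z <= 1 -> disk (S n) (upd w j z)).
    { intros z Hz i Hi. unfold upd. destruct (Nat.eqb_spec i j); auto. }
    rewrite <- (Ew (w j) eq_refl), EA, EB.
    apply mobius.
    + intros z Hz. rewrite <- EB. apply NV. apply Hupd; auto.
    + intros z Hz. rewrite <- EA, <- EB. apply IHj; [lia| apply Hupd; lra |].
      intros i Hi1 Hi2. unfold upd. destruct (Nat.eqb_spec i j); auto. apply Hc; lia.
    + apply Hw. lia.
Qed.

Lemma tangent_cos a x : 0 < a < PI/2 -> 0 <= x <= PI/2 -> cos x <= cos a - sin a * (x - a).
Proof.
  intros Ha Hx. destruct (Rtotal_order x a) as [Hlt|[->|Hgt]].
  - destruct (MVT_cor2 cos (fun t => - sin t) x a Hlt) as [c [Hc1 Hc2]].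
    { intros; apply derivable_pt_lim_cos. }
    assert (sin c <= sin a) by (apply sin_incr_1; lra).
    assert (cos a - cos x = - sin c * (a - x)) by exact Hc1.
    nra.
  - lra.
  - destruct (MVT_cor2 cos (fun t => - sin t) a x Hgt) as [c [Hc1 Hc2]].
    { intros; apply derivable_pt_lim_cos. }
    assert (sin a <= sin c) by (apply sin_incr_1; lra).
    assert (cos x - cos a = - sin c * (x - a)) by exact Hc1.
    nra.
Qed.

Lemma Rsum_le n f g : (forall i, (i < n)%nat -> f i <= g i) -> Rsum n f <= Rsum n g.
Proof. induction n; simpl; intros H; [lra|]. pose proof (H n ltac:(lia)). pose proof (IHn (fun i Hi => H i ltac:(lia))). lra. Qed.

Lemma Rsum_affine n (p q : R) x : Rsum n (fun i => p + q * x i) = INR n * p + q * Rsum n x.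
Proof. induction n; simpl Rsum; [simpl; ring|]. rewrite IHn, S_INR. ring. Qed.

Lemma Rprod_nonneg n f : (forall i, (i < n)%nat -> 0 <= f i) -> 0 <= Rprod n f.
Proof. induction n; simpl; intros H; [lra|]. apply Rmult_le_pos; [apply IHn; intros; apply H; lia| apply H; lia]. Qed.

Lemma Rprod_le n f g : (forall i, (i < n)%nat -> 0 <= f i <= g i) -> Rprod n f <= Rprod n g.
Proof.
  induction n; simpl; intros H; [lra|].
  apply Rmult_le_compat.
  - apply Rprod_nonneg; intros; apply H; lia.
  - apply H; lia.
  - apply IHn; intros; apply H; lia.
  - apply H; lia.
Qed.

Lemma Rprod_scale n K f : Rprod n (fun i => K * f i) = K ^ n * Rprod n f.
Proof. induction n; simpl; [ring|]. rewrite IHn. ring. Qed.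

Lemma Rprod_exp n p : (forall i, (i < n)%nat -> 0 <= p i) ->
  Rprod n p <= exp (Rsum n (fun i => p i - 1)).
Proof.
  induction n; simpl; intros H.
  - rewrite exp_0; lra.
  - rewrite exp_plus. apply Rmult_le_compat.
    + apply Rprod_nonneg; intros; apply H; lia.
    + apply H; lia.
    + apply IHn; intros; apply H; lia.
    + pose proof (exp_ineq1_le (p n - 1)). lra.
Qed.

Lemma exp_le1 s : s <= 0 -> exp s <= 1.
Proof. intros H. rewrite <- exp_0. destruct H as [H| ->]; [left; apply exp_increasing; auto|lra]. Qed.

Lemma cos_prod_bound m x : (3 <= m)%nat ->
  (forall i, (i < m)%nat -> 0 <= x i <= PI/2) -> PI <= Rsum m x ->
  Rprod m (fun i => 2 * cos (x i)) <= (2 * cos (PI / INR m)) ^ m.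
Proof.
  intros Hm Hx Hs.
  assert (HmR : 3 <= INR m) by (replace 3 with (INR 3) by (simpl; ring); apply le_INR; auto).
  set (a := PI / INR m).
  pose proof PI_RGT_0.
  assert (Ha : 0 < a < PI/2).
  { unfold a; split. apply Rdiv_lt_0_compat; lra.
    apply Rmult_lt_reg_r with (INR m); [lra|]. unfold Rdiv. rewrite Rmult_assoc, Rinv_l by lra. nra. }
  assert (Hma : INR m * a = PI) by (unfold a; field; lra).
  set (c := cos a).
  assert (Hc : 0 < c) by (apply cos_gt_0; lra).
  assert (Hsa : 0 < sin a) by (apply sin_gt_0; lra).
  assert (Hsum : Rsum m (fun i => cos (x i)) <= INR m * c).
  { apply Rle_trans with (Rsum m (fun i => (c + sin a * a) + (- sin a) * x i)).
    - apply Rsum_le. intros i Hi. pose proof (tangent_cos a (x i) Ha (Hx i Hi)). unfold c. lra.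
    - rewrite Rsum_affine. nra. }
  assert (E : Rprod m (fun i => 2 * cos (x i)) = (2*c)^m * Rprod m (fun i => cos (x i) / c)).
  { rewrite <- Rprod_scale. apply Rprod_ext. intros; field. lra. }
  rewrite E. fold a. fold c.
  rewrite <- (Rmult_1_r ((2*c)^m)) at 2.
  apply Rmult_le_compat_l; [apply pow_le; lra|].
  eapply Rle_trans; [apply Rprod_exp|].
  - intros i Hi. apply Rmult_le_pos; [apply cos_ge_0; pose proof (Hx i Hi); lra|]. left; apply Rinv_0_lt_compat; lra.
  - apply exp_le1.
    replace (Rsum m (fun i => cos (x i) / c - 1)) with (Rsum m (fun i => (-1) + (/c) * cos (x i))).
    + rewrite Rsum_affine.
      assert (/ c * Rsum m (fun i => cos (x i)) <= INR m).
      { apply Rmult_le_reg_l with c; [lra|]. rewrite <- Rmult_assoc, Rinv_r by lra. lra. }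
      lra.
    + apply Rsum_ext. intros; unfold Rdiv; ring.
Qed.

Lemma polar_one x y : 0 < x ->
  let r := sqrt (x*x + y*y) in let f := atan (y / x) in
  r * cos f = x /\ r * sin f = y /\ 0 < r.
Proof.
  intros Hx r f. unfold f, r. rewrite cos_atan, sin_atan.
  set (s := sqrt (1 + (y/x)²)).
  assert (Hs : 0 < s) by (apply sqrt_lt_R0; unfold Rsqr; nra).
  assert (E : sqrt (x*x+y*y) = x * s).
  { assert (Hs2 : s * s = 1 + (y/x)²) by (unfold s; apply sqrt_sqrt; unfold Rsqr; nra).
    apply sqrt_lem_1; [nra|nra|]. unfold Rsqr in Hs2.
    replace (x * s * (x * s)) with (x * x * (s * s)) by ring. rewrite Hs2. field. lra. }
  rewrite E. repeat split.
  - field; lra.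
  - field; split; lra.
  - nra.
Qed.

Lemma prod_polar m r a :
  Cxprod m (fun i => mkCx (r i * cos (a i)) (r i * sin (a i))) =
  mkCx (Rprod m r * cos (Rsum m a)) (Rprod m r * sin (Rsum m a)).
Proof.
  induction m; simpl.
  - apply Cx_eq; simpl; rewrite ?cos_0, ?sin_0; ring.
  - rewrite IHm. apply Cx_eq; simpl; rewrite ?cos_plus, ?sin_plus; ring.
Qed.

Lemma Rsum_abs n f : Rabs (Rsum n f) <= Rsum n (fun i => Rabs (f i)).
Proof.
  induction n; simpl. rewrite Rabs_R0; lra.
  eapply Rle_trans; [apply Rabs_triang|]. lra.
Qed.

Lemma Rsum_lt n f B : (0 < n)%nat -> (forall i, (i < n)%nat -> f i < B) -> Rsum n f < INR n * B.
Proof.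
  induction n; intros Hn H; [lia|]. simpl Rsum. rewrite S_INR.
  destruct n.
  - simpl. pose proof (H 0%nat ltac:(lia)). lra.
  - pose proof (IHn ltac:(lia) (fun i Hi => H i ltac:(lia))). pose proof (H (S n) ltac:(lia)). lra.
Qed.

Lemma Rprod_pos n f : (forall i, (i < n)%nat -> 0 < f i) -> 0 < Rprod n f.
Proof. induction n; simpl; intros H; [lra|]. apply Rmult_lt_0_compat; [apply IHn; intros; apply H; lia| apply H; lia]. Qed.

Lemma Rprod_const n K : Rprod n (fun _ => K) = K ^ n.
Proof. induction n; simpl; [ring|]. rewrite IHn; ring. Qed.

Lemma prod_zero m f : (exists i, (i < m)%nat /\ f i = Cx0) -> Cxprod m f = Cx0.
Proof.
  intros [i [Hi Hf]]. destruct m; [lia|].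
  rewrite (prod_skip m i f Hi), Hf. destruct (Cxprod m _). apply Cx_eq; simpl; ring.
Qed.

Lemma NV al ga m : 0 < ga -> (al < 0 -> (-al) * 2^m < ga) ->
  (0 < al -> (m <= 2)%nat \/ (2 * cos (PI / INR m))^m * al < ga) ->
  forall w, disk m w -> Bf al ga m w <> Cx0.
Proof.
  intros Hga Hneg Hpos w Hw HB. unfold Bf in HB.
  assert (HB1 : al * re (U m w) + ga = 0) by (pose proof (f_equal re HB) as h; simpl in h; lra).
  assert (HB2 : al * im (U m w) = 0) by (pose proof (f_equal im HB) as h; simpl in h; lra).
  clear HB.
  destruct (Rtotal_order al 0) as [Hal|[Hal|Hal]].
  -
    assert (NU : Nm (U m w) <= 4^m).
    { unfold U. rewrite Nm_prod, <- Rprod_const. apply Rprod_le. intros i Hi.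
      pose proof (Hw i Hi). destruct (w i) as [x y]. unfold Nm in *; simpl in *. split; nra. }
    specialize (Hneg Hal).
    assert (H4 : 4^m = 2^m * 2^m) by (rewrite <- Rpow_mult_distr; f_equal; ring).
    assert (0 < 2^m) by (apply pow_lt; lra).
    destruct (U m w) as [u1 u2]. unfold Nm in NU; simpl in *.
    assert (ga * ga = al*al*(u1*u1)) by nra.
    assert (ga*ga <= al*al*4^m) by nra.
    rewrite H4 in *. set (P := 2^m) in *.
    assert (0 <= -al * P) by nra.
    assert ((-al*P)*(-al*P) < ga*ga) by (apply Rmult_le_0_lt_compat; lra).
    nra.
  - subst. lra.
  - specialize (Hpos Hal).
    destruct (classic (exists i, (i < m)%nat /\ Cxadd Cx1 (w i) = Cx0)) as [Hz|Hnz].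
    { assert (U m w = Cx0) by (apply prod_zero; auto). rewrite H in HB1. simpl in HB1. lra. }
    assert (Hx : forall i, (i < m)%nat -> 0 < 1 + re (w i)).
    { intros i Hi. pose proof (Hw i Hi). destruct (Rle_or_lt (1 + re (w i)) 0) as [h|h]; auto.
      exfalso. apply Hnz. exists i. split; auto. destruct (w i) as [x y]. unfold Nm in *; simpl in *.
      assert (x = -1) by nra. subst. assert (y*y = 0) by nra. assert (y = 0) by nra. subst.
      apply Cx_eq; simpl; ring. }
    set (r := fun i => sqrt ((1 + re (w i)) * (1 + re (w i)) + im (w i) * im (w i))).
    set (f := fun i => atan (im (w i) / (1 + re (w i)))).
    assert (Hpol : forall i, (i < m)%nat -> r i * cos (f i) = 1 + re (w i) /\ r i * sin (f i) = im (w i) /\ 0 < r i).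
    { intros i Hi. exact (polar_one _ _ (Hx i Hi)). }
    assert (EU : U m w = mkCx (Rprod m r * cos (Rsum m f)) (Rprod m r * sin (Rsum m f))).
    { rewrite <- prod_polar. unfold U. apply prod_ext. intros i Hi. destruct (Hpol i Hi) as [A [B _]].
      apply Cx_eq; simpl; rewrite ?A, ?B; ring. }
    rewrite EU in HB1, HB2. simpl in HB1, HB2.
    assert (HR : 0 < Rprod m r) by (apply Rprod_pos; intros; apply Hpol; auto).
    assert (Hsin : sin (Rsum m f) = 0) by (apply Rmult_integral in HB2; destruct HB2 as [h|h]; [lra|]; apply Rmult_integral in h; destruct h; [lra|auto]).
    assert (HaR : 0 < al * Rprod m r) by (apply Rmult_lt_0_compat; lra).
    assert (Hcos : cos (Rsum m f) < 0) by (rewrite <- Rmult_assoc in HB1; nra).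
    destruct (sin_eq_0_0 _ Hsin) as [k Hk].
    pose proof PI_RGT_0.
    assert (HSabs : PI <= Rabs (Rsum m f)).
    { rewrite Hk. destruct (Z.lt_trichotomy k 0) as [hk|[hk|hk]].
      - assert (IZR k <= -1) by (apply IZR_le; lia).
        rewrite Rabs_left by nra. nra.
      - subst. rewrite Hk in Hcos. simpl IZR in Hcos. rewrite Rmult_0_l, cos_0 in Hcos. lra.
      - assert (1 <= IZR k) by (apply IZR_le; lia).
        rewrite Rabs_right by nra. nra. }
    assert (Hfb : forall i, (i < m)%nat -> Rabs (f i) < PI/2).
    { intros i Hi. unfold f. pose proof (atan_bound (im (w i) / (1 + re (w i)))).
      apply Rabs_def1; lra. }
    assert (Hsum : PI <= Rsum m (fun i => Rabs (f i))) by (eapply Rle_trans; [apply HSabs|apply Rsum_abs]).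
    assert (HRge : ga <= al * Rprod m r).
    { pose proof (COS_bound (Rsum m f)). nra. }
    destruct Hpos as [Hm2|Hbd].
    + destruct m as [|m'].
      * simpl in Hsum. lra.
      * pose proof (Rsum_lt (S m') (fun i => Rabs (f i)) (PI/2) ltac:(lia) Hfb).
        assert (INR (S m') <= 2) by (replace 2 with (INR 2) by (simpl; ring); apply le_INR; auto).
        nra.
    + assert (Hm3 : (3 <= m)%nat).
      { destruct (le_lt_dec 3 m); auto. exfalso.
        destruct m as [|m'].
        - simpl in Hsum. lra.
        - pose proof (Rsum_lt (S m') (fun i => Rabs (f i)) (PI/2) ltac:(lia) Hfb).
          assert (INR (S m') <= 2) by (replace 2 with (INR 2) by (simpl; ring); apply le_INR; lia).
          nra. }
      assert (HRle : Rprod m r <= Rprod m (fun i => 2 * cos (Rabs (f i)))).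
      { apply Rprod_le. intros i Hi. destruct (Hpol i Hi) as [A [_ C]].
        pose proof (Hw i Hi). pose proof (Hx i Hi).
        assert (Ec : cos (Rabs (f i)) = cos (f i)).
        { destruct (Rle_or_lt 0 (f i)); [rewrite Rabs_right by lra; auto|rewrite Rabs_left, cos_neg by lra; auto]. }
        rewrite Ec. split; [lra|].
        assert (r i * r i = (1 + re (w i)) * (1 + re (w i)) + im (w i) * im (w i)) by (unfold r; apply sqrt_sqrt; nra).
        unfold Nm in *. nra. }
      pose proof (cos_prod_bound m (fun i => Rabs (f i)) Hm3) as CB.
      assert (Rprod m (fun i => 2 * cos (Rabs (f i))) <= (2 * cos (PI / INR m)) ^ m).
      { apply CB; auto. intros i Hi. split; [apply Rabs_pos|left; apply Hfb; auto]. }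
      nra.
Qed.

Definition inv (z : Cx) := mkCx (re z / Nm z) (- im z / Nm z).

Lemma inv_mul z : 0 < Nm z -> Cxmul z (inv z) = Cx1.
Proof. intros H. destruct z as [a b]; unfold inv, Cx1, Nm in *; simpl in *. apply Cx_eq; simpl; field; lra. Qed.

Lemma Nm_inv z : 1 <= Nm z -> Nm (inv z) <= 1.
Proof.
  intros H. destruct z as [a b]; unfold inv, Nm in *; simpl in *.
  replace (a / (a * a + b * b) * (a / (a * a + b * b)) + - b / (a * a + b * b) * (- b / (a * a + b * b)))
    with (1 / (a*a+b*b)) by (field; lra).
  apply Rmult_le_reg_r with (a*a+b*b); [lra|]. unfold Rdiv. rewrite Rmult_1_l, Rinv_l by lra. lra.
Qed.

Lemma one_plus z w : Cxmul z w = Cx1 -> Cxadd Cx1 z = Cxmul z (Cxadd Cx1 w).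
Proof. intros H. destruct z, w. injection H as E1 E2. apply Cx_eq; simpl; lra. Qed.

Lemma mul4 a b c d : Cxmul (Cxmul a b) (Cxmul c d) = Cxmul (Cxmul a c) (Cxmul b d).
Proof. destruct a, b, c, d; apply Cx_eq; simpl; ring. Qed.

Lemma inv_prod n z : (forall i, (i < n)%nat -> 1 <= Nm (z i)) ->
  Cxprod n (fun i => Cxadd Cx1 (z i)) = Cxmul (Cxprod n z) (U n (fun i => inv (z i))) /\
  Cxmul (Cxprod n z) (W n (fun i => inv (z i))) = Cx1.
Proof.
  unfold U, W. induction n; intros H.
  - split; apply Cx_eq; simpl; ring.
  - destruct IHn as [I1 I2]; [intros; apply H; lia|].
    simpl. rewrite I1.
    assert (HI := inv_mul (z n) ltac:(pose proof (H n ltac:(lia)); lra)).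
    split.
    + rewrite (one_plus _ _ HI). 
      destruct (Cxprod n z), (Cxprod n (fun i => Cxadd Cx1 (inv (z i)))), (z n), (inv (z n)).
      apply Cx_eq; simpl; ring.
    + rewrite mul4, I2, HI. apply Cx_eq; simpl; ring.
Qed.

Lemma key_ident be v Uu Ww zj : Cxmul v Ww = Cx1 ->
  Cxadd (Cxmul (Cx_of_R be) (Cxmul (Cxmul v Uu) (Cxadd Cx1 zj)))
        (Cxmul (Cx_of_R (1 - be)) (Cxadd Cx1 (Cxmul v zj))) =
  Cxmul v (Cxadd (Cxadd (Cxmul (Cx_of_R be) Uu) (Cxmul (Cx_of_R (1-be)) Ww))
                 (Cxmul zj (Cxadd (Cxmul (Cx_of_R be) Uu) (Cx_of_R (1-be))))).
Proof.
  intros H. destruct v as [v1 v2], Uu as [u1 u2], Ww as [w1 w2], zj as [x y].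
  injection H as E1 E2. apply Cx_eq; simpl.
  - transitivity (v1 * (be * u1 + (1-be) * w1 + (x * (be * u1 + (1-be)) - y * (be * u2))) - v2 * (be * u2 + (1-be) * w2 + (x * (be * u2) + y * (be * u1 + (1-be))))
      + (1 - be) * (1 - (v1*w1 - v2*w2))); [ring|]. rewrite E1. ring.
  - transitivity (v1 * (be * u2 + (1-be) * w2 + (x * (be * u2) + y * (be * u1 + (1-be)))) + v2 * (be * u1 + (1-be) * w1 + (x * (be * u1 + (1-be)) - y * (be * u2)))
      + (1 - be) * (0 - (v1*w2 + v2*w1))); [ring|]. rewrite E2. ring.
Qed.

Lemma Rprod_ge1 n f : (forall i, (i < n)%nat -> 1 <= f i) -> 1 <= Rprod n f.
Proof.
  induction n; simpl; intros H; [lra|].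
  pose proof (IHn (fun i Hi => H i ltac:(lia))). pose proof (H n ltac:(lia)). nra.
Qed.

Lemma mod_ge z : 1 <= Cxmod z -> 1 <= Nm z.
Proof.
  unfold Cxmod. intros H. destruct (Rle_or_lt 1 (Nm z)) as [h|h]; auto.
  pose proof (sqrt_lt_1 (Nm z) 1 (Nm_ge0 z) ltac:(lra) h). rewrite sqrt_1 in H0. unfold Nm in *. lra.
Qed.

Lemma mod_gt z : 1 < Cxmod z -> 1 < Nm z.
Proof.
  unfold Cxmod. intros H. destruct (Rle_or_lt (Nm z) 1) as [h|h]; auto.
  pose proof (sqrt_le_1 (Nm z) 1 (Nm_ge0 z) ltac:(lra) h). rewrite sqrt_1 in H0. unfold Nm in *. lra.
Qed.

Lemma main_gen n be :
  be < 1 ->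
  (be < 0 -> (-be) * 2^n < 1 - be) ->
  (0 < be -> (n <= 2)%nat \/ (2 * cos (PI / INR n))^n * be < 1 - be) ->
  LeeYang (S n) (ising_edge (S n) be).
Proof.
  intros Hb1 Hneg Hpos z H1 [j [Hj H2]] HP.
  assert (HNV := NV be (1 - be) n ltac:(lra) Hneg Hpos).
  assert (HQ := Q_lemma be (1-be) n HNV n (le_n n)).
  set (zs := fun i => z (skip j i)).
  assert (Hzs : forall i, (i < n)%nat -> 1 <= Nm (zs i)).
  { intros i Hi. apply mod_ge, H1. apply skip_lt; auto. }
  set (w := fun i => inv (zs i)).
  assert (Hw : disk n w) by (intros i Hi; apply Nm_inv; auto).
  destruct (inv_prod n zs Hzs) as [I1 I2].
  unfold ising_edge in HP.
  rewrite (prod_at n j z (fun x => Cxadd Cx1 x)) in HP by auto.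
  rewrite (prod_skip n j z) in HP by auto.
  change (Cxprod n (fun i => Cxadd Cx1 (z (skip j i)))) with (Cxprod n (fun i => Cxadd Cx1 (zs i))) in HP.
  change (Cxprod n (fun i => z (skip j i))) with (Cxprod n zs) in HP.
  rewrite I1 in HP. rewrite (key_ident _ _ _ _ _ I2) in HP.
  fold w in HP.
  set (v := Cxprod n zs) in *.
  assert (Hv : 1 <= Nm v) by (unfold v; rewrite Nm_prod; apply Rprod_ge1; auto).
  assert (HX := f_equal Nm HP). rewrite Nm_mul in HX. unfold Nm at 3 in HX. simpl in HX.
  assert (HX0 : Nm (Cxadd (Cxadd (Cxmul (Cx_of_R be) (U n w)) (Cxmul (Cx_of_R (1 - be)) (W n w)))
                 (Cxmul (z j) (Cxadd (Cxmul (Cx_of_R be) (U n w)) (Cx_of_R (1 - be))))) = 0).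
  { pose proof (Nm_ge0 (Cxadd (Cxadd (Cxmul (Cx_of_R be) (U n w)) (Cxmul (Cx_of_R (1 - be)) (W n w)))
                 (Cxmul (z j) (Cxadd (Cxmul (Cx_of_R be) (U n w)) (Cx_of_R (1 - be)))))). nra. }
  apply N0_eq in HX0.
  specialize (HQ w Hw ltac:(lia)).
  specialize (HNV w Hw).
  unfold Af, Bf in HQ, HNV.
  assert (Hzj : 1 < Nm (z j)) by (apply mod_gt; auto).
  assert (HBpos : 0 < Nm (Cxadd (Cxmul (Cx_of_R be) (U n w)) (Cx_of_R (1 - be)))).
  { destruct (Rle_or_lt (Nm (Cxadd (Cxmul (Cx_of_R be) (U n w)) (Cx_of_R (1 - be)))) 0) as [h|h]; auto.
    exfalso. apply HNV. apply N0_eq. pose proof (Nm_ge0 (Cxadd (Cxmul (Cx_of_R be) (U n w)) (Cx_of_R (1 - be)))). lra. }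
  assert (EA : Nm (Cxadd (Cxmul (Cx_of_R be) (U n w)) (Cxmul (Cx_of_R (1 - be)) (W n w)))
              = Nm (z j) * Nm (Cxadd (Cxmul (Cx_of_R be) (U n w)) (Cx_of_R (1 - be)))).
  { rewrite <- Nm_mul. revert HX0.
    generalize (Cxadd (Cxmul (Cx_of_R be) (U n w)) (Cxmul (Cx_of_R (1 - be)) (W n w))) (Cxmul (z j) (Cxadd (Cxmul (Cx_of_R be) (U n w)) (Cx_of_R (1 - be)))).
    intros [a1 a2] [c1 c2] E. injection E as E1 E2. unfold Nm; simpl.
    replace a1 with (-c1) by lra. replace a2 with (-c2) by lra. ring. }
  rewrite EA in HQ. nra.
Qed.

Theorem lemma4p9 (k : nat) (beta : R) (hk : (2 <= k)%nat) :
  ((k = 2%nat /\ -1 < beta < 1) \/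
   ((3 <= k)%nat /\
    - (1 / (2 ^ (k - 1) - 1)) < beta /\
    beta < 1 / (2 ^ (k - 1) * (cos (PI / INR (k - 1))) ^ (k - 1) + 1))) ->
  LeeYang k (ising_edge k beta).
Proof.
  intros [[-> Hb]|[Hk [Hlo Hhi]]].
  - apply (main_gen 1 beta); [lra| |].
    + intros _. simpl. lra.
    + intros _. left. lia.
  - destruct k as [|n]; [lia|].
    replace (S n - 1)%nat with n in * by lia.
    assert (H2n : 4 <= 2^n).
    { replace 4 with (2^2) by ring. apply Rle_pow; [lra|lia]. }
    assert (Hc : 0 <= cos (PI / INR n)).
    { pose proof PI_RGT_0. assert (HnR : 3 <= INR (S n)) by (replace 3 with (INR 3) by (simpl; ring); apply le_INR; auto).
      assert (HnR2 : 2 <= INR n) by (replace 2 with (INR 2) by (simpl; ring); apply le_INR; lia).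
      apply cos_ge_0.
      - assert (0 < PI / INR n) by (apply Rdiv_lt_0_compat; lra). lra.
      - apply Rmult_le_reg_r with (INR n); [lra|]. unfold Rdiv. rewrite Rmult_assoc, Rinv_l by lra. nra. }
    set (c := cos (PI / INR n)) in *.
    assert (Hcn : 0 <= c ^ n) by (apply pow_le; auto).
    set (D := 2 ^ n * c ^ n + 1) in *.
    assert (HD : 1 <= D) by (unfold D; nra).
    assert (Hbhi : beta * D < 1).
    { apply Rmult_lt_reg_r with (/D); [apply Rinv_0_lt_compat; lra|].
      rewrite Rmult_assoc, Rinv_r, Rmult_1_r by lra. unfold Rdiv in Hhi. lra. }
    assert (Hblo : -1 < beta * (2^n - 1)).
    { assert (0 < 2^n - 1) by lra.
      apply Rmult_lt_reg_r with (/(2^n - 1)); [apply Rinv_0_lt_compat; lra|].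
      rewrite Rmult_assoc, Rinv_r, Rmult_1_r by lra. unfold Rdiv in Hlo. lra. }
    apply main_gen.
    + assert (beta < 1 \/ 1 <= beta) as [h|h] by lra; auto. nra.
    + intros Hb. nra.
    + intros Hb. right. rewrite Rpow_mult_distr. unfold D in Hbhi. fold c. lra.
Qed.
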